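(* Let $A\in\mathbb{R}^{m\times m}$ be positive definite, let $B\in\mathbb{R}^{m\times n}$ ($n\le m$) be rank deficient, and let $\alpha\ge0$, $\beta>0$. Then $\operatorname{index}(I-\mathcal{T}(\alpha,\beta))=1$, i.e. $\operatorname{rank}(I-\mathcal{T}(\alpha,\beta))=\operatorname{rank}\big((I-\mathcal{T}(\alpha,\beta))^2\big)$.
   Context: A real square matrix $A$ is called positive definite if $x^TAx>0$ for all nonzero $x\in\mathbb{R}^m$ ($A$ need not be symmetric). For $\alpha\ge0,\beta>0$ define $\mathcal{P}_{MGSSP}=\begin{pmatrix}\alpha I+2A & 2B\\ -2B^T & \beta I\end{pmatrix}$, $\mathcal{Q}_{MGSSP}=\begin{pmatrix}\alpha I+A & B\\ -B^T & \beta I\end{pmatrix}$, and the MGSSP iteration matrix $\mathcal{T}(\alpha,\beta)=\mathcal{P}_{MGSSP}^{-1}\mathcal{Q}_{MGSSP}$ ($\mathcal{P}_{MGSSP}$ is nonsingular). The index of a square matrix $M$ is the smallest $k\ge0$ with $\operatorname{rank}(M^{k})=\operatorname{rank}(M^{k+1})$. *)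

(* Defs.v *)
(* real matrices over an arbitrary real field R
   (statement is purely algebraic). *)
From HB Require Import structures.
From mathcomp Require Import all_boot all_order all_algebra.
Set Implicit Arguments. Unset Strict Implicit. Unset Printing Implicit Defensive.
Import Order.TTheory GRing.Theory Num.Theory.
Local Open Scope ring_scope.

(* x^T A x > 0 for all nonzero x (A need not be symmetric) *)
Definition posdef (R : realFieldType) (m : nat) (A : 'M[R]_m) : Prop :=
  forall x : 'cV[R]_m, x != 0 -> 0 < (x^T *m A *m x) 0 0.

(* k-th power of a square matrix (works for any size N, including non-successor) *)
Definition mxpow (R : realFieldType) (N : nat) (M : 'M[R]_N) (k : nat) : 'M[R]_N :=
  iter k (mulmx M) 1%:M.

(* index: smallest k >= 0 with rank (M^k) = rank (M^(k+1)); such k <= N always exists,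
   so searching in [0, N] finds the true minimum. *)
Definition mx_index (R : realFieldType) (N : nat) (M : 'M[R]_N) : nat :=
  nth 0%N [seq k <- iota 0 N.+1 | \rank (mxpow M k) == \rank (mxpow M k.+1)] 0%N.

Definition P_MGSSP (R : realFieldType) (m n : nat) (A : 'M[R]_m) (B : 'M[R]_(m, n))
  (alpha beta : R) : 'M[R]_(m + n) :=
  block_mx (alpha%:M + 2%:R *: A) (2%:R *: B) (- (2%:R *: B^T)) (beta%:M).

Definition Q_MGSSP (R : realFieldType) (m n : nat) (A : 'M[R]_m) (B : 'M[R]_(m, n))
  (alpha beta : R) : 'M[R]_(m + n) :=
  block_mx (alpha%:M + A) B (- B^T) (beta%:M).

Definition T_MGSSP (R : realFieldType) (m n : nat) (A : 'M[R]_m) (B : 'M[R]_(m, n))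
  (alpha beta : R) : 'M[R]_(m + n) :=
  invmx (P_MGSSP A B alpha beta) *m Q_MGSSP A B alpha beta.

(* Main.v *)
Require Import Defs.
From HB Require Import structures.
From mathcomp Require Import all_boot all_order all_algebra.
From mathcomp Require Import lra zify.
Import Order.TTheory GRing.Theory Num.Theory.
Local Open Scope ring_scope.
Lemma dot_ge0 (R : realFieldType) k (u : 'rV[R]_k) : 0 <= (u *m u^T) 0 0.
Proof.
rewrite mxE; apply: sumr_ge0 => j _; rewrite mxE -expr2; exact: sqr_ge0.
Qed.

Lemma dot_eq0 (R : realFieldType) k (u : 'rV[R]_k) : (u *m u^T) 0 0 = 0 -> u = 0.
Proof.
move=> h.
have H : \sum_j u 0 j ^+ 2 = (u *m u^T) 0 0.
  by rewrite [RHS]mxE; apply: eq_bigr => j _; rewrite mxE expr2.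
rewrite h in H.
apply/matrixP => i j; rewrite !mxE ord1.
have := @psumr_eq0P _ _ predT (fun j => u 0 j ^+ 2) (fun j _ => sqr_ge0 (u 0 j)) H j isT.
by move/eqP; rewrite sqrf_eq0 => /eqP.
Qed.

Lemma pd_row (R : realFieldType) m (A : 'M[R]_m) (v : 'rV[R]_m) :
  posdef A -> v != 0 -> 0 < (v *m A *m v^T) 0 0.
Proof.
move=> pA nz; have := pA (v^T); rewrite trmxK; apply; by rewrite trmx_eq0.
Qed.

Lemma tr11 (R : realFieldType) (c : 'M[R]_1) : c^T 0 0 = c 0 0.
Proof. by rewrite mxE. Qed.
Lemma P_inj (R : realFieldType) (m n : nat) (A : 'M[R]_m) (B : 'M[R]_(m, n))
  (alpha beta : R) (u : 'rV[R]_(m + n)) :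
  posdef A -> 0 <= alpha -> 0 < beta ->
  u *m P_MGSSP A B alpha beta = 0 -> u = 0.
Proof.
move=> pA ha hb.
rewrite -[u]hsubmxK; move: (lsubmx u) (rsubmx u) => x y.
rewrite /P_MGSSP mul_row_block -row_mx0 => /eq_row_mx [E1 E2].
have F1 := congr1 (mulmx^~ x^T) E1.
have F2 := congr1 (mulmx^~ y^T) E2.
move: F1 F2 => /=.
rewrite !mul0mx !mulmxDl !mulmxDr !mulmxDl !mul_mx_scalar -!scalemxAr -!scalemxAl !mulmxN !mulNmx.
rewrite -scalemxAr -scalemxAl.
have -> : y *m B^T *m x^T = (x *m B *m y^T)^T by rewrite !trmx_mul trmxK mulmxA.
have hxx := @dot_ge0 _ _ x; have hyy := @dot_ge0 _ _ y.
have hp : x != 0 -> 0 < (x *m A *m x^T) 0 0 by apply: pd_row.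
have hp0 : 0 <= (x *m A *m x^T) 0 0.
  case: (eqVneq x 0) => [->|nz]; first by rewrite !mul0mx mxE.
  exact: ltW (hp nz).
have hy0 := @dot_eq0 _ _ y.
move: hxx hyy hp hp0 hy0.
move: (x *m x^T) (y *m y^T) (x *m A *m x^T) (x *m B *m y^T) => a d p c.
move=> hxx hyy hp hp0 hy0 F1 F2.
move/(congr1 (fun Z : 'M[R]_1 => Z 0 0)): F1; move/(congr1 (fun Z : 'M[R]_1 => Z 0 0)): F2.
rewrite /= !mxE => G2 G1.
have h1 : 0 <= alpha * a 0 0 by apply: mulr_ge0.
have h2 : 0 <= beta * d 0 0 by apply: mulr_ge0 => //; exact: ltW.
have ep : p 0 0 = 0 by lra.
have ed : beta * d 0 0 = 0 by lra.
have -> : x = 0.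
  apply/eqP; apply: contraT => nz; have := hp nz; by rewrite ep ltxx.
rewrite hy0 //; move/eqP: ed; rewrite mulf_eq0 gt_eqF //= => /eqP //.
Qed.
Lemma P_unit (R : realFieldType) (m n : nat) (A : 'M[R]_m) (B : 'M[R]_(m, n))
  (alpha beta : R) :
  posdef A -> 0 <= alpha -> 0 < beta -> P_MGSSP A B alpha beta \in unitmx.
Proof.
move=> pA ha hb; rewrite -row_free_unit -kermx_eq0.
apply: contraT => /rowV0Pn [v]; rewrite sub_kermx => /eqP hv.
by rewrite (@P_inj _ _ _ A B alpha beta v pA ha hb hv) eqxx.
Qed.

Lemma K_core (R : realFieldType) (m n : nat) (A : 'M[R]_m) (B : 'M[R]_(m, n))
  (alpha beta : R) (w y : 'rV[R]_(m + n)) :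
  posdef A -> 0 < beta ->
  w *m block_mx A B (- B^T) 0 = 0 ->
  w *m P_MGSSP A B alpha beta = y *m block_mx A B (- B^T) 0 -> w = 0.
Proof.
move=> pA hb.
rewrite -[w]hsubmxK -[y]hsubmxK; move: (lsubmx w) (rsubmx w) (lsubmx y) (rsubmx y) => w1 w2 y1 y2.
rewrite mul_row_block -row_mx0 => /eq_row_mx [E1 E2].
rewrite !mulmx0 addr0 in E2.
have ew1 : w1 = 0.
  apply/eqP; apply: contraT => nz; have := pd_row _ _ _ _ pA nz.
  have -> : w1 *m A *m w1^T = (w1 *m A + w2 *m - B^T) *m w1^T.
    have z : w2 *m B^T *m w1^T = 0 by rewrite -mulmxA -trmx_mul E2 trmx0 mulmx0.
    by rewrite mulmxDl mulmxN mulNmx z oppr0 addr0.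
  by rewrite E1 mul0mx mxE ltxx.
rewrite ew1 in E1 *.
move: E1; rewrite mul0mx add0r mulmxN => /eqP; rewrite oppr_eq0 => /eqP E1.
rewrite /P_MGSSP !mul_row_block !mul0mx !add0r mulmx0 addr0 mul_mx_scalar.
move/eq_row_mx => [_ F].
have := congr1 (fun Z : 'M[R]_(1, n) => (Z *m w2^T) 0 0) F => /=.
rewrite -!scalemxAl -!mulmxA -[B]trmxK -trmx_mul E1 trmx0 mulmx0.
move: (@dot_eq0 _ _ w2); move: (w2 *m w2^T) => d hd; rewrite !mxE.

move=> /eqP; rewrite mulf_eq0 gt_eqF //= => /eqP /hd ->.
by rewrite row_mx0.
Qed.

Theorem lemma4p2 (R : realFieldType) (m n : nat) (A : 'M[R]_m) (B : 'M[R]_(m, n))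
  (alpha beta : R) :
  (n <= m)%N -> posdef A -> (\rank B < n)%N -> 0 <= alpha -> 0 < beta ->
  mx_index (1%:M - T_MGSSP A B alpha beta) = 1%N.
Proof.
move=> hnm pA hB ha hb.
have PU := @P_unit _ _ _ A B alpha beta pA ha hb.
have eM : 1%:M - T_MGSSP A B alpha beta =
          invmx (P_MGSSP A B alpha beta) *m block_mx A B (- B^T) 0.
  rewrite /T_MGSSP -{1}(mulVmx PU) -mulmxBr; congr mulmx.
  rewrite /P_MGSSP /Q_MGSSP opp_block_mx add_block_mx; congr block_mx.
  - by rewrite opprD addrACA subrr add0r scaler_nat mulr2n addrK.
  - by rewrite scaler_nat mulr2n addrK.
  - by rewrite opprK scaler_nat mulr2n opprD addrNK.
  - by rewrite subrr.
rewrite eM.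
set P := P_MGSSP A B alpha beta; set K := block_mx A B (- B^T) 0.
set M := invmx P *m K.
have rM : (\rank M < m + n)%N.
  apply: leq_ltn_trans (mxrankM_maxr _ _) _.
  rewrite /K block_mxEv -addsmxE.
  apply: leq_ltn_trans ((mxrank_adds_leqif _ _).1) _.
  have h1 := rank_leq_row (row_mx A B).
  have h2 : \rank (row_mx (- B^T) (0 : 'M[R]_(n, n))) = \rank B.
    by rewrite -mxrank_tr tr_row_mx trmx0 rank_col_mx0 mxrank_tr mxrank_opp mxrank_tr.
  rewrite h2; lia.
have rMM : \rank (M *m M) = \rank M.
  apply/mxrank_injP; apply: contraT => /rowV0Pn [v].
  rewrite sub_capmx => /andP [/submxP [D eD]]; rewrite sub_kermx => /eqP hv nz.
  set w := v *m invmx P.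
  have hw : w *m K = 0 by rewrite /w -mulmxA.
  have hwP : w *m P = (D *m invmx P) *m K by rewrite /w mulmxKV // eD -mulmxA.
  have w0 := @K_core _ _ _ A B alpha beta w (D *m invmx P) pA hb hw hwP.
  by move: nz; rewrite -(mulmxKV PU v) -/w w0 mul0mx eqxx.
have hpos : (0 < m + n)%N by lia.
rewrite /mx_index /mxpow.
have -> : iota 0 (m + n).+1 = [:: 0%N, 1%N & iota 2 (m + n).-1].
  by rewrite -{1}(prednK hpos).
rewrite /= (mulmx1 M) mxrank1 rMM eqxx eq_sym (ltn_eqF rM) /=.
by [].
Qed.
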